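(* Under the curve flow $\gamma_t=k_1\gamma''+k_2\gamma'-\big(k_2'+\tfrac13(k_1''+2k_1^2)\big)\gamma$, one has \[ (k_2)_t=D\Big(\tfrac23k_1^{(4)}+k_2'''-2k_1k_1''-(k_1')^2-2k_1k_2'+\tfrac49k_1^3+2k_2^2\Big), \] so $\int k_2\,\mathrm{d}x$ is conserved.
   Context: $\gamma(x,t)$ is a family of nondegenerate curves in centroaffine $\mathbb R^3$ parametrized by centroaffine arclength $x$ ($\det(\gamma,\gamma',\gamma'')=1$), with invariants $k_1,k_2$ defined by $\gamma'''=(k_1\gamma)'+k_2\gamma$; $D=\partial/\partial x$. *)

(* Defs.v *)
From Stdlib Require Import Reals List.
From Coquelicot Require Import Coquelicot.
Open Scope R_scope.

(* Functions of (x,t); x = centroaffine arclength, t = flow time. *)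
Definition pdx (f : R -> R -> R) : R -> R -> R :=
  fun x t => Derive (fun y => f y t) x.
Definition pdt (f : R -> R -> R) : R -> R -> R :=
  fun x t => Derive (fun s => f x s) t.

Definition applyD (l : list bool) (f : R -> R -> R) : R -> R -> R :=
  fold_right (fun (b : bool) g => if b then pdx g else pdt g) f l.

Definition smooth2 (f : R -> R -> R) : Prop :=
  forall (l : list bool) (x t : R),
    ex_derive (fun y => applyD l f y t) x /\
    ex_derive (fun s => applyD l f x s) t /\
    continuous (fun p : R * R => applyD l f (fst p) (snd p)) (x, t).

Definition det3 (a1 a2 a3 b1 b2 b3 c1 c2 c3 : R) : R :=
  a1 * (b2 * c3 - b3 * c2) - b1 * (a2 * c3 - a3 * c2) + c1 * (a2 * b3 - a3 * b2).

(* Main.v *)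
Require Import Defs.
From Stdlib Require Import Reals List FunctionalExtensionality.
From Coquelicot Require Import Coquelicot.
Open Scope R_scope.

Definition Xd (f : R -> R -> R) := forall y s, ex_derive (fun z => f z s) y.

Lemma exd_plus (f g : R -> R) x : ex_derive f x -> ex_derive g x -> ex_derive (fun z => f z + g z) x.
Proof. intros; apply (ex_derive_plus f g); auto. Qed.
Lemma exd_minus (f g : R -> R) x : ex_derive f x -> ex_derive g x -> ex_derive (fun z => f z - g z) x.
Proof. intros; apply (ex_derive_minus f g); auto. Qed.
Lemma exd_mult (f g : R -> R) x : ex_derive f x -> ex_derive g x -> ex_derive (fun z => f z * g z) x.
Proof. intros; apply (ex_derive_mult f g); auto. Qed.
Lemma exd_const (c : R) x : ex_derive (fun _ : R => c) x.
Proof. apply (ex_derive_const c). Qed.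

Lemma pdx_plus f g : Xd f -> Xd g ->
  pdx (fun y s => f y s + g y s) = fun y s => pdx f y s + pdx g y s.
Proof. intros Hf Hg. unfold pdx. apply functional_extensionality; intro y.
 apply functional_extensionality; intro s. apply (Derive_plus (fun z => f z s) (fun z => g z s)); auto. Qed.
Lemma pdx_minus f g : Xd f -> Xd g ->
  pdx (fun y s => f y s - g y s) = fun y s => pdx f y s - pdx g y s.
Proof. intros Hf Hg. unfold pdx. apply functional_extensionality; intro y.
 apply functional_extensionality; intro s. apply (Derive_minus (fun z => f z s) (fun z => g z s)); auto. Qed.
Lemma pdx_mult f g : Xd f -> Xd g ->
  pdx (fun y s => f y s * g y s) = fun y s => pdx f y s * g y s + f y s * pdx g y s.
Proof. intros Hf Hg. unfold pdx. apply functional_extensionality; intro y.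
 apply functional_extensionality; intro s. apply (Derive_mult (fun z => f z s) (fun z => g z s)); auto. Qed.
Lemma pdx_const (c : R) : pdx (fun _ _ => c) = fun _ _ => 0.
Proof. unfold pdx. apply functional_extensionality; intro y.
 apply functional_extensionality; intro s. apply Derive_const. Qed.

Fixpoint XN (n : nat) (f : R -> R -> R) : Prop :=
  match n with O => Xd f | S n => Xd f /\ XN n (pdx f) end.
Definition XS f := forall n, XN n f.

Lemma XN_Xd n f : XN n f -> Xd f.
Proof. destruct n; simpl; tauto. Qed.
Lemma XN_down n f : XN (S n) f -> XN n f.
Proof. revert f; induction n; intros f H; simpl in *. tauto. split; [tauto|]. apply IHn; tauto. Qed.

Lemma XN_plus n : forall f g, XN n f -> XN n g -> XN n (fun y s => f y s + g y s).
Proof. induction n; intros f g Hf Hg.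
 - simpl in *. intros y s. apply exd_plus; auto.
 - simpl in *. destruct Hf, Hg. split. intros y s; apply exd_plus; auto.
   rewrite pdx_plus by auto. apply IHn; auto. Qed.
Lemma XN_minus n : forall f g, XN n f -> XN n g -> XN n (fun y s => f y s - g y s).
Proof. induction n; intros f g Hf Hg.
 - simpl in *. intros y s. apply exd_minus; auto.
 - simpl in *. destruct Hf, Hg. split. intros y s; apply exd_minus; auto.
   rewrite pdx_minus by auto. apply IHn; auto. Qed.
Lemma XN_mult n : forall f g, XN n f -> XN n g -> XN n (fun y s => f y s * g y s).
Proof. induction n; intros f g Hf Hg.
 - simpl in *. intros y s. apply exd_mult; auto.
 - pose proof (XN_down _ _ Hf). pose proof (XN_down _ _ Hg).
   simpl in *. destruct Hf, Hg. split. intros y s; apply exd_mult; auto.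
   rewrite pdx_mult by auto. apply XN_plus; apply IHn; auto. Qed.
Lemma XN_const n : forall c, XN n (fun _ _ => c).
Proof. induction n; intros c; simpl. intros y s; apply exd_const.
 split. intros y s; apply exd_const. rewrite pdx_const. apply IHn. Qed.

Lemma XS_plus f g : XS f -> XS g -> XS (fun y s => f y s + g y s).
Proof. intros ? ? n; apply XN_plus; auto. Qed.
Lemma XS_minus f g : XS f -> XS g -> XS (fun y s => f y s - g y s).
Proof. intros ? ? n; apply XN_minus; auto. Qed.
Lemma XS_mult f g : XS f -> XS g -> XS (fun y s => f y s * g y s).
Proof. intros ? ? n; apply XN_mult; auto. Qed.
Lemma XS_const c : XS (fun _ _ => c).
Proof. intros n; apply XN_const. Qed.
Lemma XS_pdx f : XS f -> XS (pdx f).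
Proof. intros H n. exact (proj2 (H (S n))). Qed.
Lemma XS_Xd f : XS f -> Xd f.
Proof. intros H; exact (H O). Qed.
Lemma XS_ext f g : (forall y s, f y s = g y s) -> XS f -> XS g.
Proof. intros E H. replace g with f; auto. apply functional_extensionality; intro y.
 apply functional_extensionality; intro s. auto. Qed.

Lemma applyD_app l1 l2 f : applyD (l1 ++ l2) f = applyD l1 (applyD l2 f).
Proof. unfold applyD. apply fold_right_app. Qed.
Lemma smooth2_pdx f : smooth2 f -> smooth2 (pdx f).
Proof. intros H l x t. specialize (H (l ++ true :: nil) x t).
 rewrite applyD_app in H. exact H. Qed.
Lemma smooth2_pdt f : smooth2 f -> smooth2 (pdt f).
Proof. intros H l x t. specialize (H (l ++ false :: nil) x t).
 rewrite applyD_app in H. exact H. Qed.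
Lemma smooth2_Xd f : smooth2 f -> Xd f.
Proof. intros H y s. exact (proj1 (H nil y s)). Qed.
Lemma smooth2_Td f : smooth2 f -> forall x t, ex_derive (fun s => f x s) t.
Proof. intros H x t. exact (proj1 (proj2 (H nil x t))). Qed.
Lemma smooth2_XS f : smooth2 f -> XS f.
Proof. intros H n; revert f H; induction n; intros f H; simpl.
 apply smooth2_Xd; auto. split. apply smooth2_Xd; auto. apply IHn, smooth2_pdx; auto. Qed.

Lemma smooth2_cont f : smooth2 f -> forall x t, continuity_2d_pt f x t.
Proof. intros H x t. apply continuity_2d_pt_filterlim. exact (proj2 (proj2 (H nil x t))). Qed.

Lemma schwarz1 f : smooth2 f -> forall x t, pdt (pdx f) x t = pdx (pdt f) x t.
Proof. intros H x t. unfold pdt, pdx. symmetry. apply Schwarz.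
 - exists (mkposreal 1 Rlt_0_1). intros u v _ _. split; [|split; [|split]].
   + apply smooth2_Xd; auto.
   + apply smooth2_Td; auto.
   + apply (smooth2_Xd (pdt f)). apply smooth2_pdt; auto.
   + apply (smooth2_Td (pdx f)). apply smooth2_pdx; auto.
 - apply (smooth2_cont (pdx (pdt f))). apply smooth2_pdx, smooth2_pdt; auto.
 - apply (smooth2_cont (pdt (pdx f))). apply smooth2_pdt, smooth2_pdx; auto.
Qed.
Lemma XS_opp f : XS f -> XS (fun y s => - f y s).
Proof. intros H. apply (XS_ext (fun y s => (fun _ _ => -1) y s * f y s)).
 intros; ring. apply XS_mult; auto. apply XS_const. Qed.

Lemma Derive_det3 (a1 a2 a3 b1 b2 b3 c1 c2 c3 : R -> R) t :
  ex_derive a1 t -> ex_derive a2 t -> ex_derive a3 t ->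
  ex_derive b1 t -> ex_derive b2 t -> ex_derive b3 t ->
  ex_derive c1 t -> ex_derive c2 t -> ex_derive c3 t ->
  Derive (fun s => det3 (a1 s) (a2 s) (a3 s) (b1 s) (b2 s) (b3 s) (c1 s) (c2 s) (c3 s)) t
  = det3 (Derive a1 t) (Derive a2 t) (Derive a3 t) (b1 t) (b2 t) (b3 t) (c1 t) (c2 t) (c3 t)
  + det3 (a1 t) (a2 t) (a3 t) (Derive b1 t) (Derive b2 t) (Derive b3 t) (c1 t) (c2 t) (c3 t)
  + det3 (a1 t) (a2 t) (a3 t) (b1 t) (b2 t) (b3 t) (Derive c1 t) (Derive c2 t) (Derive c3 t).
Proof. intros. unfold det3. apply is_derive_unique. auto_derive; [repeat split; auto | ]. repeat match goal with |- context [Derive (fun x => ?f x) t] => change (Derive (fun x => f x) t) with (Derive f t) end; ring. Qed.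
Lemma ex_derive_det3 (a1 a2 a3 b1 b2 b3 c1 c2 c3 : R -> R) t :
  ex_derive a1 t -> ex_derive a2 t -> ex_derive a3 t ->
  ex_derive b1 t -> ex_derive b2 t -> ex_derive b3 t ->
  ex_derive c1 t -> ex_derive c2 t -> ex_derive c3 t ->
  ex_derive (fun s => det3 (a1 s) (a2 s) (a3 s) (b1 s) (b2 s) (b3 s) (c1 s) (c2 s) (c3 s)) t.
Proof. intros. unfold det3. auto_derive; repeat split; auto. Qed.


Ltac xs := repeat (first [assumption | apply XS_pdx | apply XS_minus | apply XS_plus | apply XS_mult | apply XS_opp | apply XS_const]).

Ltac xd := apply XS_Xd; xs.
Ltac expand HS := repeat (first [rewrite HS | rewrite pdx_plus by xd | rewrite pdx_minus by xd | rewrite pdx_mult by xd | rewrite pdx_const]; cbv beta).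

Section F.
Variables G k1 k2 : R -> R -> R.
Hypotheses (XG : XS G) (X1 : XS k1) (X2 : XS k2).
Hypothesis HS : pdx (pdx (pdx G)) = fun y s => k1 y s * pdx G y s + (pdx k1 y s + k2 y s) * G y s.
Hypothesis HF : pdt G = fun y s => k1 y s * pdx (pdx G) y s + k2 y s * pdx G y s - (pdx k2 y s + / 3 * (pdx (pdx k1) y s + 2 * (k1 y s * k1 y s))) * G y s.
Lemma fA3 x t : pdx (pdx (pdx G)) x t = ((1)*(pdx k1 x t) + (1)*(k2 x t)) * G x t + ((1)*(k1 x t)) * pdx G x t + 0 * pdx (pdx G) x t.
Proof using XG X1 X2 HS. rewrite HS. ring. Qed.
Lemma fA4 x t : pdx (pdx (pdx (pdx G))) x t = ((1)*(pdx (pdx k1) x t) + (1)*(pdx k2 x t)) * G x t + ((2)*(pdx k1 x t) + (1)*(k2 x t)) * pdx G x t + ((1)*(k1 x t)) * pdx (pdx G) x t.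
Proof using XG X1 X2 HS. expand HS. ring. Qed.
Lemma fB0 x t : pdt G x t = ((-2/3)*(k1 x t)*(k1 x t) + (-1/3)*(pdx (pdx k1) x t) + (-1)*(pdx k2 x t)) * G x t + ((1)*(k2 x t)) * pdx G x t + ((1)*(k1 x t)) * pdx (pdx G) x t.
Proof using XG X1 X2 HS HF. rewrite HF. expand HS. field. Qed.
Lemma fB1 x t : pdx (pdt G) x t = ((-1/3)*(k1 x t)*(pdx k1 x t) + (1)*(k1 x t)*(k2 x t) + (-1/3)*(pdx (pdx (pdx k1)) x t) + (-1)*(pdx (pdx k2) x t)) * G x t + ((1/3)*(k1 x t)*(k1 x t) + (-1/3)*(pdx (pdx k1) x t)) * pdx G x t + ((1)*(pdx k1 x t) + (1)*(k2 x t)) * pdx (pdx G) x t.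
Proof using XG X1 X2 HS HF. rewrite HF. expand HS. field. Qed.
Lemma fB2 x t : pdx (pdx (pdt G)) x t = ((-1/3)*(k1 x t)*(pdx (pdx k1) x t) + (1)*(k1 x t)*(pdx k2 x t) + (2/3)*(pdx k1 x t)*(pdx k1 x t) + (3)*(pdx k1 x t)*(k2 x t) + (-1/3)*(pdx (pdx (pdx (pdx k1))) x t) + (1)*(k2 x t)*(k2 x t) + (-1)*(pdx (pdx (pdx k2)) x t)) * G x t + ((4/3)*(k1 x t)*(pdx k1 x t) + (2)*(k1 x t)*(k2 x t) + (-2/3)*(pdx (pdx (pdx k1)) x t) + (-1)*(pdx (pdx k2) x t)) * pdx G x t + ((1/3)*(k1 x t)*(k1 x t) + (2/3)*(pdx (pdx k1) x t) + (1)*(pdx k2 x t)) * pdx (pdx G) x t.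
Proof using XG X1 X2 HS HF. rewrite HF. expand HS. field. Qed.
Lemma fB3 x t : pdx (pdx (pdx (pdt G))) x t = ((1/3)*(k1 x t)*(k1 x t)*(pdx k1 x t) + (1/3)*(k1 x t)*(k1 x t)*(k2 x t) + (-1/3)*(k1 x t)*(pdx (pdx (pdx k1)) x t) + (1)*(k1 x t)*(pdx (pdx k2) x t) + (5/3)*(pdx k1 x t)*(pdx (pdx k1) x t) + (5)*(pdx k1 x t)*(pdx k2 x t) + (11/3)*(pdx (pdx k1) x t)*(k2 x t) + (-1/3)*(pdx (pdx (pdx (pdx (pdx k1)))) x t) + (3)*(k2 x t)*(pdx k2 x t) + (-1)*(pdx (pdx (pdx (pdx k2))) x t)) * G x t + ((1/3)*(k1 x t)*(k1 x t)*(k1 x t) + (5/3)*(k1 x t)*(pdx (pdx k1) x t) + (4)*(k1 x t)*(pdx k2 x t) + (2)*(pdx k1 x t)*(pdx k1 x t) + (5)*(pdx k1 x t)*(k2 x t) + (-1)*(pdx (pdx (pdx (pdx k1))) x t) + (1)*(k2 x t)*(k2 x t) + (-2)*(pdx (pdx (pdx k2)) x t)) * pdx G x t + ((2)*(k1 x t)*(pdx k1 x t) + (2)*(k1 x t)*(k2 x t)) * pdx (pdx G) x t.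
Proof using XG X1 X2 HS HF. rewrite HF. expand HS. field. Qed.
Lemma fB4 x t : pdx (pdx (pdx (pdx (pdt G)))) x t = ((1/3)*(k1 x t)*(k1 x t)*(pdx (pdx k1) x t) + (1/3)*(k1 x t)*(k1 x t)*(pdx k2 x t) + (8/3)*(k1 x t)*(pdx k1 x t)*(pdx k1 x t) + (14/3)*(k1 x t)*(pdx k1 x t)*(k2 x t) + (-1/3)*(k1 x t)*(pdx (pdx (pdx (pdx k1))) x t) + (2)*(k1 x t)*(k2 x t)*(k2 x t) + (1)*(k1 x t)*(pdx (pdx (pdx k2)) x t) + (4/3)*(pdx k1 x t)*(pdx (pdx (pdx k1)) x t) + (6)*(pdx k1 x t)*(pdx (pdx k2) x t) + (5/3)*(pdx (pdx k1) x t)*(pdx (pdx k1) x t) + (26/3)*(pdx (pdx k1) x t)*(pdx k2 x t) + (11/3)*(pdx (pdx (pdx k1)) x t)*(k2 x t) + (-1/3)*(pdx (pdx (pdx (pdx (pdx (pdx k1))))) x t) + (3)*(k2 x t)*(pdx (pdx k2) x t) + (3)*(pdx k2 x t)*(pdx k2 x t) + (-1)*(pdx (pdx (pdx (pdx (pdx k2)))) x t)) * G x t + ((10/3)*(k1 x t)*(k1 x t)*(pdx k1 x t) + (7/3)*(k1 x t)*(k1 x t)*(k2 x t) + (4/3)*(k1 x t)*(pdx (pdx (pdx k1)) x t) + (5)*(k1 x t)*(pdx (pdx k2) x t) + (22/3)*(pdx k1 x t)*(pdx (pdx k1) x t) + (14)*(pdx k1 x t)*(pdx k2 x t) + (26/3)*(pdx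 (pdx k1) x t)*(k2 x t) + (-4/3)*(pdx (pdx (pdx (pdx (pdx k1)))) x t) + (5)*(k2 x t)*(pdx k2 x t) + (-3)*(pdx (pdx (pdx (pdx k2))) x t)) * pdx G x t + ((1/3)*(k1 x t)*(k1 x t)*(k1 x t) + (11/3)*(k1 x t)*(pdx (pdx k1) x t) + (6)*(k1 x t)*(pdx k2 x t) + (4)*(pdx k1 x t)*(pdx k1 x t) + (7)*(pdx k1 x t)*(k2 x t) + (-1)*(pdx (pdx (pdx (pdx k1))) x t) + (1)*(k2 x t)*(k2 x t) + (-2)*(pdx (pdx (pdx k2)) x t)) * pdx (pdx G) x t.
Proof using XG X1 X2 HS HF. rewrite HF. expand HS. field. Qed.
End F.


Lemma schwarz_fun f : smooth2 f -> pdt (pdx f) = pdx (pdt f).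
Proof. intros H. apply functional_extensionality; intro x; apply functional_extensionality; intro t. apply schwarz1; auto. Qed.
Lemma sw0 f x t : Derive (fun s => f x s) t = pdt f x t.
Proof. reflexivity. Qed.
Lemma sw1 f x t : smooth2 f -> Derive (fun s => pdx f x s) t = pdx (pdt f) x t.
Proof. intros H. apply schwarz1; auto. Qed.
Lemma sw2' f x t : smooth2 f -> pdt (pdx (pdx f)) x t = pdx (pdx (pdt f)) x t.
Proof. intros H. rewrite (schwarz_fun (pdx f)) by (apply smooth2_pdx; auto). rewrite (schwarz_fun f) by auto. reflexivity. Qed.
Lemma sw2 f x t : smooth2 f -> Derive (fun s => pdx (pdx f) x s) t = pdx (pdx (pdt f)) x t.
Proof. intros H. exact (sw2' f x t H). Qed.
Lemma sw3' f x t : smooth2 f -> pdt (pdx (pdx (pdx f))) x t = pdx (pdx (pdx (pdt f))) x t.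
Proof. intros H. rewrite (schwarz_fun (pdx (pdx f))) by (apply smooth2_pdx, smooth2_pdx; auto).
 rewrite (schwarz_fun (pdx f)) by (apply smooth2_pdx; auto). rewrite (schwarz_fun f) by auto. reflexivity. Qed.
Lemma sw3 f x t : smooth2 f -> Derive (fun s => pdx (pdx (pdx f)) x s) t = pdx (pdx (pdx (pdt f))) x t.
Proof. intros H. exact (sw3' f x t H). Qed.
Lemma sw4' f x t : smooth2 f -> pdt (pdx (pdx (pdx (pdx f)))) x t = pdx (pdx (pdx (pdx (pdt f)))) x t.
Proof. intros H. rewrite (schwarz_fun (pdx (pdx (pdx f)))) by (apply smooth2_pdx, smooth2_pdx, smooth2_pdx; auto).
 rewrite (schwarz_fun (pdx (pdx f))) by (apply smooth2_pdx, smooth2_pdx; auto).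
 rewrite (schwarz_fun (pdx f)) by (apply smooth2_pdx; auto). rewrite (schwarz_fun f) by auto. reflexivity. Qed.
Lemma sw4 f x t : smooth2 f -> Derive (fun s => pdx (pdx (pdx (pdx f))) x s) t = pdx (pdx (pdx (pdx (pdt f)))) x t.
Proof. intros H. exact (sw4' f x t H). Qed.

Ltac td := match goal with |- ex_derive (fun s => ?F ?a s) ?b => refine (smooth2_Td F _ a b) | |- ex_derive (?F ?a) ?b => refine (smooth2_Td F _ a b) end; repeat (match goal with |- smooth2 (pdx ?f) => apply (smooth2_pdx f) end); assumption.
Ltac expand0 := repeat (first [rewrite pdx_plus by xd | rewrite pdx_minus by xd | rewrite pdx_mult by xd | rewrite pdx_const]; cbv beta).

Theorem mainTheorem5 (g1 g2 g3 k1 k2 : R -> R -> R) :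
  smooth2 g1 -> smooth2 g2 -> smooth2 g3 ->
  (forall x t,
     det3 (g1 x t) (g2 x t) (g3 x t)
          (pdx g1 x t) (pdx g2 x t) (pdx g3 x t)
          (pdx (pdx g1) x t) (pdx (pdx g2) x t) (pdx (pdx g3) x t) = 1) ->
  (forall g, (g = g1 \/ g = g2 \/ g = g3) ->
     forall x t,
       pdx (pdx (pdx g)) x t
       = pdx (fun y s => k1 y s * g y s) x t + k2 x t * g x t) ->
  (forall g, (g = g1 \/ g = g2 \/ g = g3) ->
     forall x t,
       pdt g x t
       = k1 x t * pdx (pdx g) x t + k2 x t * pdx g x t
         - (pdx k2 x t + / 3 * (pdx (pdx k1) x t + 2 * k1 x t ^ 2)) * g x t) ->
  forall x t,
    pdt k2 x t
    = pdx (fun y s =>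
            2 / 3 * pdx (pdx (pdx (pdx k1))) y s
            + pdx (pdx (pdx k2)) y s
            - 2 * k1 y s * pdx (pdx k1) y s
            - (pdx k1 y s) ^ 2
            - 2 * k1 y s * pdx k2 y s
            + 4 / 9 * k1 y s ^ 3
            + 2 * k2 y s ^ 2) x t.
Proof.
intros S1 S2 S3 Hdet Hst Hfl x t.
assert (XG1 : XS g1) by (apply smooth2_XS; auto).
assert (XG2 : XS g2) by (apply smooth2_XS; auto).
assert (XG3 : XS g3) by (apply smooth2_XS; auto).
assert (XT1 : XS (pdt g1)) by (apply smooth2_XS, smooth2_pdt; auto).
assert (XT2 : XS (pdt g2)) by (apply smooth2_XS, smooth2_pdt; auto).
assert (XT3 : XS (pdt g3)) by (apply smooth2_XS, smooth2_pdt; auto).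
assert (F1 := Hfl g1 (or_introl eq_refl)).
assert (F2 := Hfl g2 (or_intror (or_introl eq_refl))).
assert (F3 := Hfl g3 (or_intror (or_intror eq_refl))).
assert (Hk1 : forall y s, k1 y s = det3 (g1 y s) (g2 y s) (g3 y s) (pdx g1 y s) (pdx g2 y s) (pdx g3 y s) (pdt g1 y s) (pdt g2 y s) (pdt g3 y s)).
{ intros y s. rewrite F1, F2, F3. transitivity (k1 y s * det3 (g1 y s) (g2 y s) (g3 y s) (pdx g1 y s) (pdx g2 y s) (pdx g3 y s) (pdx (pdx g1) y s) (pdx (pdx g2) y s) (pdx (pdx g3) y s)).
  rewrite Hdet; ring. unfold det3; ring. }
assert (Hk2 : forall y s, k2 y s = det3 (g1 y s) (g2 y s) (g3 y s) (pdt g1 y s) (pdt g2 y s) (pdt g3 y s) (pdx (pdx g1) y s) (pdx (pdx g2) y s) (pdx (pdx g3) y s)).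
{ intros y s. rewrite F1, F2, F3. transitivity (k2 y s * det3 (g1 y s) (g2 y s) (g3 y s) (pdx g1 y s) (pdx g2 y s) (pdx g3 y s) (pdx (pdx g1) y s) (pdx (pdx g2) y s) (pdx (pdx g3) y s)).
  rewrite Hdet; ring. unfold det3; ring. }
assert (X1 : XS k1).
{ eapply XS_ext. intros y s; symmetry; apply Hk1. unfold det3; xs. }
assert (X2 : XS k2).
{ eapply XS_ext. intros y s; symmetry; apply Hk2. unfold det3; xs. }
assert (HS1 : pdx (pdx (pdx g1)) = fun y s => k1 y s * pdx g1 y s + (pdx k1 y s + k2 y s) * g1 y s).
{ apply functional_extensionality; intro y; apply functional_extensionality; intro s.
  rewrite (Hst g1 (or_introl eq_refl)). rewrite pdx_mult by xd. ring. }
assert (HF1 : pdt g1 = fun y s => k1 y s * pdx (pdx g1) y s + k2 y s * pdx g1 y s - (pdx k2 y s + / 3 * (pdx (pdx k1) y s + 2 * (k1 y s * k1 y s))) * g1 y s).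
{ apply functional_extensionality; intro y; apply functional_extensionality; intro s.
  rewrite F1. ring. }
assert (HS2 : pdx (pdx (pdx g2)) = fun y s => k1 y s * pdx g2 y s + (pdx k1 y s + k2 y s) * g2 y s).
{ apply functional_extensionality; intro y; apply functional_extensionality; intro s.
  rewrite (Hst g2 (or_intror (or_introl eq_refl))). rewrite pdx_mult by xd. ring. }
assert (HF2 : pdt g2 = fun y s => k1 y s * pdx (pdx g2) y s + k2 y s * pdx g2 y s - (pdx k2 y s + / 3 * (pdx (pdx k1) y s + 2 * (k1 y s * k1 y s))) * g2 y s).
{ apply functional_extensionality; intro y; apply functional_extensionality; intro s.
  rewrite F2. ring. }
assert (HS3 : pdx (pdx (pdx g3)) = fun y s => k1 y s * pdx g3 y s + (pdx k1 y s + k2 y s) * g3 y s).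
{ apply functional_extensionality; intro y; apply functional_extensionality; intro s.
  rewrite (Hst g3 (or_intror (or_intror eq_refl))). rewrite pdx_mult by xd. ring. }
assert (HF3 : pdt g3 = fun y s => k1 y s * pdx (pdx g3) y s + k2 y s * pdx g3 y s - (pdx k2 y s + / 3 * (pdx (pdx k1) y s + 2 * (k1 y s * k1 y s))) * g3 y s).
{ apply functional_extensionality; intro y; apply functional_extensionality; intro s.
  rewrite F3. ring. }
assert (HK2 : forall y s, k2 y s = 2 * (det3 (pdx (pdx (pdx (g1))) y s) (pdx (pdx (pdx (g2))) y s) (pdx (pdx (pdx (g3))) y s) (pdx g1 y s) (pdx g2 y s) (pdx g3 y s) (pdx (pdx g1) y s) (pdx (pdx g2) y s) (pdx (pdx g3) y s)) - (det3 (g1 y s) (g2 y s) (g3 y s) (pdx (pdx (pdx (pdx (g1)))) y s) (pdx (pdx (pdx (pdx (g2)))) y s) (pdx (pdx (pdx (pdx (g3)))) y s) (pdx (pdx g1) y s) (pdx (pdx g2) y s) (pdx (pdx g3) y s))).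
{ intros y s.
  rewrite (fA4 g1 k1 k2 XG1 X1 X2 HS1 y s), (fA3 g1 k1 k2 XG1 X1 X2 HS1 y s).
  rewrite (fA4 g2 k1 k2 XG2 X1 X2 HS2 y s), (fA3 g2 k1 k2 XG2 X1 X2 HS2 y s).
  rewrite (fA4 g3 k1 k2 XG3 X1 X2 HS3 y s), (fA3 g3 k1 k2 XG3 X1 X2 HS3 y s).
  transitivity (k2 y s * det3 (g1 y s) (g2 y s) (g3 y s) (pdx g1 y s) (pdx g2 y s) (pdx g3 y s) (pdx (pdx g1) y s) (pdx (pdx g2) y s) (pdx (pdx g3) y s)). rewrite Hdet; ring. unfold det3; ring. }
assert (Hr : (fun y s =>
            2 / 3 * pdx (pdx (pdx (pdx k1))) y s
            + pdx (pdx (pdx k2)) y s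
            - 2 * k1 y s * pdx (pdx k1) y s
            - (pdx k1 y s) ^ 2
            - 2 * k1 y s * pdx k2 y s
            + 4 / 9 * k1 y s ^ 3
            + 2 * k2 y s ^ 2) = (fun y s =>
            2 / 3 * pdx (pdx (pdx (pdx k1))) y s
            + pdx (pdx (pdx k2)) y s
            - 2 * k1 y s * pdx (pdx k1) y s
            - (pdx k1 y s) * (pdx k1 y s)
            - 2 * k1 y s * pdx k2 y s
            + 4 / 9 * (k1 y s * (k1 y s * k1 y s))
            + 2 * (k2 y s * k2 y s))).
{ apply functional_extensionality; intro y; apply functional_extensionality; intro s. ring. }
assert (ER : pdx (fun y s =>
            2 / 3 * pdx (pdx (pdx (pdx k1))) y s
            + pdx (pdx (pdx k2)) y s
            - 2 * k1 y s * pdx (pdx k1) y s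
            - (pdx k1 y s) ^ 2
            - 2 * k1 y s * pdx k2 y s
            + 4 / 9 * k1 y s ^ 3
            + 2 * k2 y s ^ 2) x t = ((4/3)*(k1 x t)*(k1 x t)*(pdx k1 x t) + (-2)*(k1 x t)*(pdx (pdx (pdx k1)) x t) + (-2)*(k1 x t)*(pdx (pdx k2) x t) + (-4)*(pdx k1 x t)*(pdx (pdx k1) x t) + (-2)*(pdx k1 x t)*(pdx k2 x t) + (2/3)*(pdx (pdx (pdx (pdx (pdx k1)))) x t) + (4)*(k2 x t)*(pdx k2 x t) + (1)*(pdx (pdx (pdx (pdx k2))) x t))).
{ rewrite Hr. expand0. field. }
rewrite ER.
replace (pdt k2 x t) with (Derive (fun s => 2 * (det3 (pdx (pdx (pdx (g1))) x s) (pdx (pdx (pdx (g2))) x s) (pdx (pdx (pdx (g3))) x s) (pdx g1 x s) (pdx g2 x s) (pdx g3 x s) (pdx (pdx g1) x s) (pdx (pdx g2) x s) (pdx (pdx g3) x s)) - (det3 (g1 x s) (g2 x s) (g3 x s) (pdx (pdx (pdx (pdx (g1)))) x s) (pdx (pdx (pdx (pdx (g2)))) x s) (pdx (pdx (pdx (pdx (g3)))) x s) (pdx (pdx g1) x s) (pdx (pdx g2) x s) (pdx (pdx g3) x s))) t)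
  by (unfold pdt; apply Derive_ext; intro s; symmetry; apply HK2).
assert (EL1 : Derive (fun s => det3 (pdx (pdx (pdx (g1))) x s) (pdx (pdx (pdx (g2))) x s) (pdx (pdx (pdx (g3))) x s) (pdx g1 x s) (pdx g2 x s) (pdx g3 x s) (pdx (pdx g1) x s) (pdx (pdx g2) x s) (pdx (pdx g3) x s)) t = det3 (Derive (fun s => pdx (pdx (pdx (g1))) x s) t) (Derive (fun s => pdx (pdx (pdx (g2))) x s) t) (Derive (fun s => pdx (pdx (pdx (g3))) x s) t) (pdx g1 x t) (pdx g2 x t) (pdx g3 x t) (pdx (pdx g1) x t) (pdx (pdx g2) x t) (pdx (pdx g3) x t) + det3 (pdx (pdx (pdx (g1))) x t) (pdx (pdx (pdx (g2))) x t) (pdx (pdx (pdx (g3))) x t) (Derive (fun s => pdx g1 x s) t) (Derive (fun s => pdx g2 x s) t) (Derive (fun s => pdx g3 x s) t) (pdx (pdx g1) x t) (pdx (pdx g2) x t) (pdx (pdx g3) x t) + det3 (pdx (pdx (pdx (g1))) x t) (pdx (pdx (pdx (g2))) x t) (pdx (pdx (pdx (g3))) x t) (pdx g1 x t) (pdx g2 x t) (pdx g3 x t) (Derive (fun s => pdx (pdx g1) x s) t) (Derive (fun s => pdx (pdx g2) x s) t) (Derive (fun s => pdx (pdx g3) x s) t)).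
{ pose proof (Derive_det3 (fun s => pdx (pdx (pdx (g1))) x s) (fun s => pdx (pdx (pdx (g2))) x s) (fun s => pdx (pdx (pdx (g3))) x s) (fun s => pdx g1 x s) (fun s => pdx g2 x s) (fun s => pdx g3 x s) (fun s => pdx (pdx g1) x s) (fun s => pdx (pdx g2) x s) (fun s => pdx (pdx g3) x s)) as HH. cbv beta in HH. rewrite HH; try reflexivity; td. }
assert (EL2 : Derive (fun s => det3 (g1 x s) (g2 x s) (g3 x s) (pdx (pdx (pdx (pdx (g1)))) x s) (pdx (pdx (pdx (pdx (g2)))) x s) (pdx (pdx (pdx (pdx (g3)))) x s) (pdx (pdx g1) x s) (pdx (pdx g2) x s) (pdx (pdx g3) x s)) t = det3 (Derive (fun s => g1 x s) t) (Derive (fun s => g2 x s) t) (Derive (fun s => g3 x s) t) (pdx (pdx (pdx (pdx (g1)))) x t) (pdx (pdx (pdx (pdx (g2)))) x t) (pdx (pdx (pdx (pdx (g3)))) x t) (pdx (pdx g1) x t) (pdx (pdx g2) x t) (pdx (pdx g3) x t) + det3 (g1 x t) (g2 x t) (g3 x t) (Derive (fun s => pdx (pdx (pdx (pdx (g1)))) x s) t) (Derive (fun s => pdx (pdx (pdx (pdx (g2)))) x s) t) (Derive (fun s => pdx (pdx (pdx (pdx (g3)))) x s) t) (pdx (pdx g1) x t) (pdx (pdx g2) x t) (pdx (pdx g3) x t) + det3 (g1 x t) (g2 x t) (g3 x t) (pdx (pdx (pdx (pdx (g1)))) x t) (pdx (pdx (pdx (pdx (g2)))) x t) (pdx (pdx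 (pdx (pdx (g3)))) x t) (Derive (fun s => pdx (pdx g1) x s) t) (Derive (fun s => pdx (pdx g2) x s) t) (Derive (fun s => pdx (pdx g3) x s) t)).
{ pose proof (Derive_det3 (fun s => g1 x s) (fun s => g2 x s) (fun s => g3 x s) (fun s => pdx (pdx (pdx (pdx (g1)))) x s) (fun s => pdx (pdx (pdx (pdx (g2)))) x s) (fun s => pdx (pdx (pdx (pdx (g3)))) x s) (fun s => pdx (pdx g1) x s) (fun s => pdx (pdx g2) x s) (fun s => pdx (pdx g3) x s)) as HH. cbv beta in HH. rewrite HH; try reflexivity; td. }

rewrite Derive_minus, Derive_scal, EL1, EL2.
2: apply ex_derive_scal. 2,3: apply ex_derive_det3; td.

rewrite (sw4 g1 x t S1), (sw3 g1 x t S1), (sw2 g1 x t S1), (sw1 g1 x t S1), (sw0 g1 x t).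
rewrite (sw4 g2 x t S2), (sw3 g2 x t S2), (sw2 g2 x t S2), (sw1 g2 x t S2), (sw0 g2 x t).
rewrite (sw4 g3 x t S3), (sw3 g3 x t S3), (sw2 g3 x t S3), (sw1 g3 x t S3), (sw0 g3 x t).
rewrite (fB4 g1 k1 k2 XG1 X1 X2 HS1 HF1 x t), (fB3 g1 k1 k2 XG1 X1 X2 HS1 HF1 x t), (fB2 g1 k1 k2 XG1 X1 X2 HS1 HF1 x t), (fB1 g1 k1 k2 XG1 X1 X2 HS1 HF1 x t), (fB0 g1 k1 k2 XG1 X1 X2 HS1 HF1 x t).
rewrite !(fA4 g1 k1 k2 XG1 X1 X2 HS1 x t), !(fA3 g1 k1 k2 XG1 X1 X2 HS1 x t).
rewrite (fB4 g2 k1 k2 XG2 X1 X2 HS2 HF2 x t), (fB3 g2 k1 k2 XG2 X1 X2 HS2 HF2 x t), (fB2 g2 k1 k2 XG2 X1 X2 HS2 HF2 x t), (fB1 g2 k1 k2 XG2 X1 X2 HS2 HF2 x t), (fB0 g2 k1 k2 XG2 X1 X2 HS2 HF2 x t).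
rewrite !(fA4 g2 k1 k2 XG2 X1 X2 HS2 x t), !(fA3 g2 k1 k2 XG2 X1 X2 HS2 x t).
rewrite (fB4 g3 k1 k2 XG3 X1 X2 HS3 HF3 x t), (fB3 g3 k1 k2 XG3 X1 X2 HS3 HF3 x t), (fB2 g3 k1 k2 XG3 X1 X2 HS3 HF3 x t), (fB1 g3 k1 k2 XG3 X1 X2 HS3 HF3 x t), (fB0 g3 k1 k2 XG3 X1 X2 HS3 HF3 x t).
rewrite !(fA4 g3 k1 k2 XG3 X1 X2 HS3 x t), !(fA3 g3 k1 k2 XG3 X1 X2 HS3 x t).

transitivity (((4/3)*(k1 x t)*(k1 x t)*(pdx k1 x t) + (-2)*(k1 x t)*(pdx (pdx (pdx k1)) x t) + (-2)*(k1 x t)*(pdx (pdx k2) x t) + (-4)*(pdx k1 x t)*(pdx (pdx k1) x t) + (-2)*(pdx k1 x t)*(pdx k2 x t) + (2/3)*(pdx (pdx (pdx (pdx (pdx k1)))) x t) + (4)*(k2 x t)*(pdx k2 x t) + (1)*(pdx (pdx (pdx (pdx k2))) x t)) * det3 (g1 x t) (g2 x t) (g3 x t) (pdx g1 x t) (pdx g2 x t) (pdx g3 x t) (pdx (pdx g1) x t) (pdx (pdx g2) x t) (pdx (pdx g3) x t)).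
unfold det3; field. rewrite Hdet; field.
Qed.
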